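(* Let $I$ be a finite set and let $T$ be a tree on $I$. For any subset $J \subseteq I$ there exists a unique tree $T_J$ on the leaf set $J$ such that $T_J \sqcup |_{I\setminus J} \leq T$ in the poset $\operatorname{For}(I)$.
   Context: A tree on a finite set $I$ is a (non-planar) rooted binary tree whose leaves are bijectively labeled by $I$: its vertices are inner vertices (of valence $3$) and leaves and the root (of valence $1$), and edges are oriented towards the root; a tree consisting of a single leaf (no inner vertices) is allowed. A forest on $I$ is a set of trees whose leaf sets form a partition of $I$; $\sqcup$ denotes disjoint union of forests. For forests $F,G$ on $I$, we set $F \leq G$ if there is a continuous (topological) map from $F$ to $G$ which (D1) is increasing with respect to the orientation towards the root, (D2) maps inner vertices to inner vertices injectively, (D3) restricts to the identity of $I$ on leaves, and (D4) is injective on each tree of $F$. This defines a poset $\operatorname{For}(I)$. For $J \subseteq I$, $|_J$ denotes the forest on $J$ with no inner vertices (each element of $J$ is a one-leaf tree). *)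

(* Defs.v *)
From mathcomp Require Import all_boot.
Set Implicit Arguments. Unset Strict Implicit. Unset Printing Implicit Defensive.

(* Encoding of forests.  A (non-planar, rooted, binary, leaf-labelled) forest *)
(* with leaf set J (a subset of the finite type I) is encoded by the set of   *)
(* its "clades": for every vertex v (leaf or inner vertex, not the root),     *)
(* the set of leaf labels below v.  Leaves are the singletons [set i];       *)
(* inner vertices are the clades with at least two elements; the tree order  *)
(* (towards the root) is inclusion; the trees of the forest are the maximal  *)
(* clades.  This is the standard bijection between isomorphism classes of    *)
(* such forests and families of clades satisfying the conditions below.      *)

Section Forests.
Variable I : finType.

Definition laminar (F : {set {set I}}) : Prop :=
  forall A B, A \in F -> B \in F ->
    [|| A \subset B, B \subset A | [disjoint A & B]].

Definition is_forest (J : {set I}) (F : {set {set I}}) : Prop :=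
  [/\ (forall A, A \in F -> A \subset J /\ A != set0),
      (forall i, i \in J -> [set i] \in F),
      laminar F &
      (forall A, A \in F -> 1 < #|A| ->
         exists B C, [/\ B \in F, C \in F, B != set0, C != set0 &
                         [disjoint B & C] /\ A = B :|: C])].

Definition is_tree (J : {set I}) (T : {set {set I}}) : Prop :=
  is_forest J T /\ J \in T.

(* |_K : the forest on K with no inner vertices. *)
Definition bars (K : {set I}) : {set {set I}} := [set [set i] | i in K].

Definition is_parent (F : {set {set I}}) (A B : {set I}) : Prop :=
  [/\ A \in F, B \in F, A \proper B &
      forall C, C \in F -> A \subset C -> C \subset B -> C = A \/ C = B].

Definition same_tree (F : {set {set I}}) (A A' : {set I}) : Prop :=
  exists T, [/\ T \in F, A \subset T & A' \subset T].

(* Cells of the geometric realisation: a vertex X, or the open edge leaving  *)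
(* the vertex X towards the root (to its parent, or the root half-edge).     *)
Inductive cell := Vtx of {set I} | Edg of {set I}.

Definition cell_base (c : cell) : {set I} :=
  match c with Vtx A => A | Edg A => A end.

(* The cells of the target forest G met by the image, under the continuous   *)
(* increasing map determined by the vertex map f, of a cell of F.  A non-root *)
(* edge A -> B is mapped onto the (unique, increasing) path from f A to f B;  *)
(* the root half-edge above a maximal clade A is mapped to an initial piece   *)
(* of the open edge above f A.                                               *)
Definition cell_img (F G : {set {set I}}) (f : {set I} -> {set I})
    (c d : cell) : Prop :=
  match c, d with
  | Vtx A, Vtx X => X = f A
  | Vtx _, Edg _ => False
  | Edg A, Vtx X =>
      exists B, [/\ is_parent F A B, X \in G, f A \proper X & X \proper f B]
  | Edg A, Edg X =>
      (exists B, [/\ is_parent F A B, X \in G, f A \subset X & X \proper f B])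
      \/ ((forall B, ~ is_parent F A B) /\ X = f A)
  end.

Definition is_cell (F : {set {set I}}) (c : cell) : Prop := cell_base c \in F.

Definition forest_le (F G : {set {set I}}) : Prop :=
  is_forest [set: I] F /\ is_forest [set: I] G /\
  exists f : {set I} -> {set I},
    [/\
        (forall A, A \in F -> f A \in G),
        (forall A B, A \in F -> B \in F -> A \subset B -> f A \subset f B),
        (forall A, A \in F -> 1 < #|A| -> 1 < #|f A|) &
        ((forall A B, A \in F -> B \in F -> 1 < #|A| -> 1 < #|B| ->
           f A = f B -> A = B) /\
        (forall i, f [set i] = [set i]) /\
        (forall c1 c2, is_cell F c1 -> is_cell F c2 ->
           same_tree F (cell_base c1) (cell_base c2) -> c1 <> c2 ->
           forall d, ~ (cell_img F G f c1 d /\ cell_img F G f c2 d)))]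
.

End Forests.

(* Main.v *)
Require Import Defs.
From mathcomp Require Import all_boot.
Set Implicit Arguments. Unset Strict Implicit.

Definition lca (I : finType) (T : {set {set I}}) (X : {set I}) :=
  [arg min_(A < setT | (A \in T) && (X \subset A)) #|A|].

Lemma disj_false (I : finType) (A B : {set I}) x :
  [disjoint A & B] -> x \in A -> x \in B -> False.
Proof. by move=> d xA; rewrite (disjointFr d xA). Qed.

Lemma lam_cmp (I : finType) (T : {set {set I}}) A B x :
  laminar T -> A \in T -> B \in T -> x \in A -> x \in B ->
  A \subset B \/ B \subset A.
Proof.
move=> L AT BT xA xB; case/or3P: (L A B AT BT) => [->|->|d]; auto.
by case: (disj_false d xA xB).
Qed.

Lemma lca_spec (I : finType) (T : {set {set I}}) X :
  laminar T -> setT \in T -> X != set0 ->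
  [/\ lca T X \in T, X \subset lca T X &
      forall A, A \in T -> X \subset A -> lca T X \subset A].
Proof.
move=> L hT X0; rewrite /lca; case: arg_minnP; first by rewrite hT subsetT.
move=> A0 /andP[A0T XA0] min; split=> // A AT XA.
case/set0Pn: X0 => x xX.
case: (lam_cmp L A0T AT (subsetP XA0 x xX) (subsetP XA x xX)) => // sub.
have := min A; rewrite AT XA => /(_ isT) le.
by have -> : A0 = A by apply/eqP; rewrite eq_sym eqEcard sub le.
Qed.
Definition restr (I : finType) (T : {set {set I}}) (J : {set I}) :=
  [set B | (B != set0) && [exists A in T, B == A :&: J]].

Lemma restrP (I : finType) (T : {set {set I}}) J B :
  reflect (B != set0 /\ exists2 A, A \in T & B = A :&: J) (B \in restr T J).
Proof.
rewrite inE; apply: (iffP andP).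
  by case=> -> /existsP[A /andP[AT /eqP->]]; split=> //; exists A.
case=> n0 [A AT eB]; split=> //; apply/existsP; exists A; by rewrite AT eB eqxx.
Qed.

Lemma restr_sub (I : finType) (T : {set {set I}}) J B :
  B \in restr T J -> B \subset J.
Proof. by case/restrP=> _ [A _ ->]; apply: subsetIr. Qed.

Lemma restr_n0 (I : finType) (T : {set {set I}}) J B :
  B \in restr T J -> B != set0.
Proof. by case/restrP. Qed.

Lemma restr_lca (I : finType) (T : {set {set I}}) J B :
  laminar T -> setT \in T -> B \in restr T J -> lca T B :&: J = B.
Proof.
move=> L hT BR; have [_ [A AT eB]] := restrP _ _ _ BR.
have [lT sB mB] := lca_spec L hT (restr_n0 BR).
apply/eqP; rewrite eqEsubset subsetI sB (restr_sub BR) andbT.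
have sA : B \subset A by rewrite eB subsetIl.
by rewrite {2}eB setSI // mB.
Qed.

Lemma restr_lam (I : finType) (T : {set {set I}}) J :
  laminar T -> laminar (restr T J).
Proof.
move=> L X Y /restrP[_ [A AT ->]] /restrP[_ [B BT ->]].
case/or3P: (L A B AT BT) => [s|s|d].
- by rewrite (setSI J s).
- by rewrite (setSI J s) orbT.
- by rewrite (disjointW (subsetIl _ _) (subsetIl _ _) d) !orbT.
Qed.

Lemma restr_in (I : finType) (T : {set {set I}}) J A :
  A \in T -> A :&: J != set0 -> A :&: J \in restr T J.
Proof. by move=> AT n0; apply/restrP; split=> //; exists A. Qed.

Lemma restr_bin (I : finType) (T : {set {set I}}) J :
  is_forest setT T -> setT \in T ->
  forall X, X \in restr T J -> 1 < #|X| ->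
         exists B C, [/\ B \in restr T J, C \in restr T J, B != set0, C != set0 &
                         [disjoint B & C] /\ X = B :|: C].
Proof.
move=> [Hne Hsg L Hb] hT X XR X1.
have [lT sX mX] := lca_spec L hT (restr_n0 XR).
have eX := restr_lca L hT XR.
have A1 : 1 < #|lca T X| by apply: leq_trans X1 (subset_leq_card sX).
have [B [C [BT CT B0 C0 [dBC eA]]]] := Hb _ lT A1.
have key : forall B C, B \in T -> C \in T -> B != set0 -> [disjoint B & C] ->
   lca T X = B :|: C -> B :&: J != set0.
  move=> B' C' B'T C'T B'0 d e; apply/negP => /eqP b0.
  have XC : X \subset C' by rewrite -eX e setIUl b0 set0U subsetIl.
  have := mX _ C'T XC; rewrite e subUset => /andP[sBC _].
  case/set0Pn: B'0 => x xB.
  by apply: (disj_false d xB (subsetP sBC x xB)).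
have BJ := key _ _ BT CT B0 dBC eA.
have CJ : C :&: J != set0 by apply: (key _ _ CT BT C0); rewrite 1?disjoint_sym // setUC.
exists (B :&: J), (C :&: J); split; rewrite ?restr_in //.
split; first by rewrite (disjointW (subsetIl _ _) (subsetIl _ _) dBC).
by rewrite -setIUl -eA eX.
Qed.

Lemma restr_forest (I : finType) (T : {set {set I}}) J :
  is_forest setT T -> setT \in T -> is_forest J (restr T J).
Proof.
move=> Hf hT; have [Hne Hsg L Hb] := Hf; split.
- by move=> A AR; rewrite (restr_sub AR) (restr_n0 AR).
- move=> i iJ; have -> : [set i] = [set i] :&: J.
    by apply/setP=> x; rewrite !inE; case: eqP => // ->.
  by apply: restr_in; [apply: Hsg; rewrite inE | apply/set0Pn; exists i; rewrite !inE eqxx].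
- exact: restr_lam.
- exact: restr_bin.
Qed.

Definition Fo (I : finType) (T : {set {set I}}) J := restr T J :|: bars (~: J).

Lemma FoP (I : finType) (T : {set {set I}}) J A :
  A \in Fo T J -> A \in restr T J \/ exists2 k, k \notin J & A = [set k].
Proof.
rewrite /Fo inE => /orP[->|/imsetP[k]]; first by left.
by rewrite inE => kJ ->; right; exists k.
Qed.

Lemma disj1 (I : finType) (A J : {set I}) k :
  A \subset J -> k \notin J -> [disjoint A & [set k]].
Proof.
move=> AJ kJ; rewrite disjoints_subset; apply/subsetP=> x xA.
rewrite !inE; apply/eqP=> e; subst x; by rewrite (subsetP AJ k xA) in kJ.
Qed.

Lemma Fo_forest (I : finType) (T : {set {set I}}) J :
  is_forest setT T -> setT \in T -> is_forest setT (Fo T J).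
Proof.
move=> Hf hT; have [Hne Hsg L Hb] := restr_forest J Hf hT; split.
- move=> A /FoP[AR|[k _ ->]]; first by rewrite subsetT; case: (Hne _ AR).
  by rewrite subsetT; split=> //; apply/set0Pn; exists k; rewrite inE.
- move=> i _; rewrite /Fo inE; case: (boolP (i \in J)) => iJ.
    by rewrite Hsg.
  by apply/orP; right; apply/imsetP; exists i; rewrite // inE.
- move=> A B /FoP[AR|[k kJ ->]] /FoP[BR|[k' kJ' ->]].
  + exact: L.
  + by rewrite (disj1 (proj1 (Hne _ AR)) kJ') !orbT.
  + by rewrite disjoint_sym (disj1 (proj1 (Hne _ BR)) kJ) !orbT.
  + case: (eqVneq k k') => [e|nkk].
      by subst k'; rewrite subxx.
    have d : [disjoint [set k] & [set k']].
      by rewrite disjoints_subset sub1set !inE.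
    by rewrite d !orbT.
- move=> A /FoP[AR|[k _ ->]] A1; last by rewrite cards1 in A1.
  have [B [C [BR CR B0 C0 [d e]]]] := Hb _ AR A1.
  by exists B, C; split; rewrite // /Fo inE ?BR ?CR.
Qed.

Lemma set1_n0 (I : finType) (i : I) : [set i] != set0.
Proof. by apply/set0Pn; exists i; rewrite inE. Qed.

Lemma lca1 (I : finType) (T : {set {set I}}) i :
  is_forest setT T -> setT \in T -> lca T [set i] = [set i].
Proof.
move=> [_ Hsg L _] hT.
have [_ s m] := lca_spec L hT (set1_n0 i).
apply/eqP; rewrite eqEsubset s andbT; apply: m => //; apply: Hsg; by rewrite inE.
Qed.

Lemma Fo_n0 (I : finType) (T : {set {set I}}) J A : A \in Fo T J -> A != set0.
Proof. by case/FoP=> [/restr_n0 //|[k _ ->]]; apply: set1_n0. Qed.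

Definition baseimg (I : finType) (T : {set {set I}}) J (A X : {set I}) :=
  (A \in restr T J /\ X :&: J = A) \/ (exists2 k, k \notin J & A = [set k] /\ X = [set k]).

Lemma baseimg_eq (I : finType) (T : {set {set I}}) J A B X :
  baseimg T J A X -> baseimg T J B X -> A = B.
Proof.
have aux : forall A k, A \in restr T J -> k \notin J -> [set k] :&: J = A -> False.
  move=> A' k AR kJ e; case/set0Pn: (restr_n0 AR) => x; rewrite -e !inE.
  by case/andP=> /eqP-> kJ'; rewrite kJ' in kJ.
case=> [[AR eA]|[k kJ [eA eX]]] [[BR eB]|[k' kJ' [eB eX']]].
- by rewrite -eA -eB.
- by rewrite eX' in eA; case: (aux _ _ AR kJ' eA).
- by rewrite eX in eB; case: (aux _ _ BR kJ eB).
- rewrite eA eB; move: eX'; rewrite eX => /setP/(_ k); rewrite !inE eqxx.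
  by move/esym/eqP => ->.
Qed.

Lemma vtx_case (I : finType) (T : {set {set I}}) J A :
  is_forest setT T -> setT \in T -> A \in Fo T J -> baseimg T J A (lca T A).
Proof.
move=> Hf hT; have [_ _ L _] := Hf; case/FoP=> [AR|[k kJ ->]].
  by left; split=> //; apply: restr_lca.
by right; exists k => //; rewrite lca1.
Qed.

Lemma no_parent_bars (I : finType) (T : {set {set I}}) (J : {set I}) k B :
  k \notin J -> ~ is_parent (Fo T J) [set k] B.
Proof.
move=> kJ [_ BF pr _]; have kB : k \in B by rewrite (subsetP (proper_sub pr)) ?set11.
case/FoP: BF => [BR|[k' _ eB]].
  by rewrite (subsetP (restr_sub BR) k kB) in kJ.
by subst; move: kB pr; rewrite inE => /eqP ->; rewrite properE subxx.
Qed.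

Lemma edge_case (I : finType) (T : {set {set I}}) J A B X :
  is_forest setT T -> setT \in T -> is_parent (Fo T J) A B -> X \in T ->
  lca T A \subset X -> X \proper lca T B -> baseimg T J A X.
Proof.
move=> Hf hT par XT sX pX; have [_ _ L _] := Hf.
have [AF BF pAB mAB] := par.
case/FoP: (AF) => [AR|[k kJ eA]]; last by rewrite eA in par; case: (no_parent_bars kJ par).
have [_ sA _] := lca_spec L hT (restr_n0 AR).
have AJ := restr_sub AR.
have BR : B \in restr T J.
  case/FoP: BF => // [[k kJ eB]]; case/set0Pn: (restr_n0 AR) => x xA.
  have := subsetP (proper_sub pAB) x xA; rewrite eB inE => /eqP ex; subst x.
  by rewrite (subsetP AJ k xA) in kJ.
have [lBT sB mB] := lca_spec L hT (restr_n0 BR).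
left; split => //.
have AY : A \subset X :&: J by rewrite subsetI AJ (subset_trans sA sX).
have YR : X :&: J \in restr T J.
  apply: restr_in => //; apply/set0Pn; case/set0Pn: (restr_n0 AR) => x xA.
  by exists x; rewrite (subsetP AY).
have YB : X :&: J \subset B.
  by rewrite -(restr_lca L hT BR) setSI // proper_sub.
have YF : X :&: J \in Fo T J by rewrite /Fo inE YR.
case: (mAB _ YF AY YB) => // eYB.
have h : lca T B \subset X by apply: mB => //; rewrite -eYB subsetIl.
by move: pX; rewrite properE h andbF.
Qed.

Lemma key_cell (I : finType) (T : {set {set I}}) J c d :
  is_forest setT T -> setT \in T -> is_cell (Fo T J) c ->
  cell_img (Fo T J) T (lca T) c d -> baseimg T J (cell_base c) (cell_base d).
Proof.
move=> Hf hT; case: c => A /= AF; case: d => X //= .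
- by move=> ->; apply: vtx_case.
- case=> B [par XT pX pB]; apply: (edge_case Hf hT par XT _ pB).
  exact: proper_sub.
- case=> [[B [par XT pX pB]]|[_ ->]].
    exact: (edge_case Hf hT par XT pX pB).
  exact: vtx_case.
Qed.

Lemma restr_of_inner (I : finType) (T : {set {set I}}) J A :
  A \in Fo T J -> 1 < #|A| -> A \in restr T J.
Proof. by case/FoP=> // [[k _ ->]]; rewrite cards1. Qed.

Lemma vtx_edg (I : finType) (T : {set {set I}}) J A d :
  cell_img (Fo T J) T (lca T) (Vtx A) d ->
  cell_img (Fo T J) T (lca T) (Edg A) d -> False.
Proof.
case: d => X //= ->; case=> B [_ _ p _]; by rewrite properE subxx in p.
Qed.

Lemma exist_le (I : finType) (T : {set {set I}}) J :
  is_forest setT T -> setT \in T -> forest_le (Fo T J) T.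
Proof.
move=> Hf hT; have [_ _ L _] := Hf.
split; first exact: Fo_forest.
split=> //; exists (lca T); split.
- by move=> A AF; have [] := lca_spec L hT (Fo_n0 AF).
- move=> A B AF BF sAB.
  have [lBT sB _] := lca_spec L hT (Fo_n0 BF).
  have [_ _ mA] := lca_spec L hT (Fo_n0 AF).
  by apply: mA => //; apply: subset_trans sAB sB.
- move=> A AF A1; have [_ sA _] := lca_spec L hT (Fo_n0 AF).
  by apply: leq_trans A1 (subset_leq_card sA).
split.
  move=> A B AF BF A1 B1 e.
  have AR := restr_of_inner AF A1; have BR := restr_of_inner BF B1.
  by rewrite -(restr_lca L hT AR) e restr_lca.
split; first by move=> i; apply: lca1.
move=> c1 c2 C1 C2 _ ne d [i1 i2].
have e := baseimg_eq (key_cell Hf hT C1 i1) (key_cell Hf hT C2 i2).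
move: C1 C2 i1 i2 e ne; case: c1 => A; case: c2 => B /= _ _ i1 i2 e; subst B => //.
- by move=> _; apply: (vtx_edg i1 i2).
- by move=> _; apply: (vtx_edg i2 i1).
Qed.

Lemma FbP (I : finType) (S : {set {set I}}) J A :
  A \in S :|: bars (~: J) -> A \in S \/ exists2 k, k \notin J & A = [set k].
Proof.
rewrite inE => /orP[->|/imsetP[k]]; first by left.
by rewrite inE => kJ ->; right; exists k.
Qed.

Lemma uniq_sub (I : finType) (T : {set {set I}}) J TJ :
  is_forest setT T -> setT \in T -> is_tree J TJ ->
  forest_le (TJ :|: bars (~: J)) T -> forall X, X \in TJ -> X \in restr T J.
Proof.
move=> Hf hT [[sJ sgJ _ _] JT] [_ [_ [g [gT gmon ginn [ginj [g1 D4]]]]]].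
have [_ _ L _] := Hf.
set F := TJ :|: bars (~: J).
have inF : forall V, V \in TJ -> V \in F by move=> V VT; rewrite inE VT.
have sg_in : forall V x, V \in F -> x \in V -> [set x] \in F.
  move=> V x VF; case/FbP: (VF) => [VT|[k _ eV]] xV.
    by apply: inF; apply: sgJ; apply: (subsetP (proj1 (sJ _ VT))).
  by move: xV; rewrite eV inE => /eqP ->; rewrite -eV.
have sub_g : forall V, V \in F -> V \subset g V.
  move=> V VF; apply/subsetP=> x xV.
  have := gmon _ _ (sg_in _ _ VF xV) VF; rewrite g1 !sub1set; apply.
  done.
have inJ : forall V x, V \in F -> x \in V -> x \in J -> V \in TJ.
  move=> V x /FbP[//|[k kJ eV]]; rewrite eV inE => /eqP -> kJ'.
  by rewrite kJ' in kJ.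
move=> X XT; have XF := inF _ XT; have [XJ X0] := sJ _ XT.
have eX : g X :&: J = X.
  apply/eqP; rewrite eqEsubset andbC subsetI sub_g // XJ /=.
  apply/subsetP=> i; rewrite inE => /andP[igX iJ].
  apply/negPn/negP => iX.
  have X1 : 1 < #|X|.
    rewrite ltnNge; apply/negP => X1.
    have : #|X| == 1 by rewrite eqn_leq X1 card_gt0.
    case/cards1P => x ex; move: igX; rewrite ex g1 inE => /eqP ei.
    by move: iX; rewrite ex ei inE eqxx.
  have gX1 := ginn _ XF X1.
  have iF : [set i] \in F by apply: inF; apply: sgJ.
  pose P := fun W => (W \in F) && (i \in W) && (g W \subset g X).
  have Pi : P [set i] by rewrite /P iF set11 g1 sub1set.
  case: (@arg_maxnP _ [set i] P (fun W => #|W|) Pi) => W /andP[/andP[WF iW] gWX] maxW.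
  have WT := inJ _ _ WF iW iJ.
  case: (eqVneq (g W) (g X)) => [eg|neg].
    case: (ltnP 1 #|W|) => W1.
      by move: iX; rewrite -(ginj _ _ WF XF W1 X1 eg) iW.
    have : #|W| == 1 by rewrite eqn_leq W1 card_gt0; apply/set0Pn; exists i.
    case/cards1P => x ex; move: iW; rewrite ex inE => /eqP ei; subst x.
    by move: gX1; rewrite -eg ex g1 cards1.
  have pWX : g W \proper g X by rewrite properEneq neg gWX.
  have JF := inF _ JT.
  have WJ : W \proper J.
    rewrite properEneq (proj1 (sJ _ WT)) andbT; apply/eqP => eW.
    have := gmon _ _ XF JF XJ; rewrite -eW => h.
    by move: pWX; rewrite properE h andbF.
  pose Q := fun V => (V \in F) && (W \proper V).
  have QJ : Q J by rewrite /Q JF WJ.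
  case: (@arg_minnP _ J Q (fun V => #|V|) QJ) => W' /andP[W'F pW] minW.
  have par : is_parent F W W'.
    split=> // C CF sWC sCW.
    case: (eqVneq C W) => [->|nCW]; first by left.
    right; apply/eqP; rewrite eqEcard sCW /=; apply: minW.
    by rewrite /Q CF properEneq eq_sym nCW sWC.
  have iW' : i \in W' by rewrite (subsetP (proper_sub pW)).
  have nW'X : ~~ (g W' \subset g X).
    apply/negP => h; have := maxW W'; rewrite /P W'F iW' h => /(_ isT).
    by move=> le; have := leq_trans (proper_card pW) le; rewrite ltnn.
  have gW'T := gT _ W'F.
  have pXW' : g X \proper g W'.
    rewrite properE nW'X andbT.
    case: (lam_cmp L (gT _ XF) gW'T igX (subsetP (sub_g _ W'F) _ iW')) => // h.
    by rewrite h in nW'X.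
  apply: (D4 (Vtx X) (Edg W) XF WF _ _ (Vtx (g X))) => //=.
    by exists J; split=> //; apply: (proj1 (sJ _ WT)).
  split=> //; exists W'; split=> //; exact: gT.
by rewrite -eX; apply: restr_in; rewrite ?gT // eX.
Qed.

Lemma sub_UC (I : finType) (Y B C : {set I}) :
  Y \subset B :|: C -> [disjoint Y & B] -> Y \subset C.
Proof.
move=> s d; apply/subsetP=> x xY; have := subsetP s x xY; rewrite inE.
by case/orP => // xB; case: (disj_false d xY xB).
Qed.

Lemma uniq_sup (I : finType) (T : {set {set I}}) J TJ :
  is_forest setT T -> setT \in T -> is_tree J TJ ->
  (forall X, X \in TJ -> X \in restr T J) ->
  forall Y, Y \in restr T J -> Y \in TJ.
Proof.
move=> Hf hT [[sJ sgJ _ bJ] JT] sub Y YR.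
have [_ _ L _] := Hf; have LR := @restr_lam _ _ J L.
pose P := fun Z => (Z \in TJ) && (Y \subset Z).
have PJ : P J by rewrite /P JT (restr_sub YR).
case: (@arg_minnP _ J P (fun V => #|V|) PJ) => Z /andP[ZT YZ] minZ.
case: (eqVneq Z Y) => [<-//|nZY].
have pYZ : Y \proper Z by rewrite properEneq eq_sym nZY.
have Z1 : 1 < #|Z|.
  apply: leq_trans (proper_card pYZ); have := restr_n0 YR; rewrite -card_gt0.
  by [].
have [B [C [BT CT B0 C0 [dBC eZ]]]] := bJ _ ZT Z1.
have notin : forall B C, B \in TJ -> C != set0 -> [disjoint B & C] ->
    Z = B :|: C -> ~~ (Y \subset B).
  move=> B' C' B'T C'0 d e; apply/negP => YB.
  have := minZ B'; rewrite /P B'T YB => /(_ isT) le.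
  have eB : B' = Z by apply/eqP; rewrite eqEcard le e subsetUl.
  case/set0Pn: C'0 => x xC.
  have xB : x \in B' by rewrite eB e inE xC orbT.
  by case: (disj_false d xB xC).
have nB := notin _ _ BT C0 dBC eZ.
have nC : ~~ (Y \subset C).
  by apply: (notin _ _ CT B0); rewrite 1?disjoint_sym // setUC.
have sBY : forall B C : {set I}, B \in TJ -> ~~ (Y \subset B) -> ~~ (Y \subset C) ->
    Y \subset B :|: C -> B \subset Y.
  move=> B' C' B'T nB' nC' s.
  case/or3P: (LR _ _ YR (sub _ B'T)) => [h|//|d]; first by rewrite h in nB'.
  by rewrite (sub_UC s d) in nC'.
have YBC : Y \subset B :|: C by rewrite -eZ.
have := sBY _ _ BT nB nC YBC.
have := sBY _ _ CT nC nB; rewrite setUC => /(_ YBC) sC sB.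
have ZY : Z \subset Y by rewrite eZ subUset sB sC.
by move: pYZ; rewrite properE ZY andbF.
Qed.

Theorem lemma3p2 (I : finType) (T : {set {set I}}) (J : {set I}) :
  is_tree [set: I] T -> J != set0 ->
  exists! TJ : {set {set I}},
    is_tree J TJ /\ forest_le (TJ :|: bars (~: J)) T.
Proof.
move=> [Hf hT] J0; exists (restr T J); split.
  split; first by split; [exact: restr_forest | have := @restr_in _ T J setT hT; rewrite setTI; apply].
  exact: exist_le.
move=> TJ [tr le]; have s := uniq_sub Hf hT tr le.
apply/setP=> X; apply/idP/idP; first exact: uniq_sup Hf hT tr s X.
exact: s.
Qed.
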